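(* For all $P,Q\in\Gamma_n$ ($n\ge2$), $$M_{SA}(P\|Q)\le \tfrac13 M_{SH}(P\|Q)\le \tfrac14\Delta(P\|Q)\le \tfrac12 M_{SG}(P\|Q)\le h(P\|Q),$$ and $$\xi_{SA}(P\|Q)\le \tfrac13\xi_{SH}(P\|Q)\le \tfrac14\xi_{\Delta}(P\|Q)\le \tfrac12\xi_{SG}(P\|Q)\le \xi_h(P\|Q).$$
   Context: $\Gamma_n=\{P=(p_1,\dots,p_n): p_i>0,\ \sum_i p_i=1\}$. For $f:(0,\infty)\to\mathbb{R}$, $C_f(P\|Q)=\sum_{i=1}^n q_i f(p_i/q_i)$; for differentiable $f$, $E_f(P\|Q)=\sum_{i=1}^n (p_i-q_i) f'(p_i/q_i)$ and $\xi_f(P\|Q)=E_f(P\|Q)-C_f(P\|Q)$. Define on $(0,\infty)$: $f_{SA}(x)=\sqrt{(x^2+1)/2}-\frac{x+1}{2}$, $f_{SG}(x)=\sqrt{(x^2+1)/2}-\sqrt{x}$, $f_{SH}(x)=\sqrt{(x^2+1)/2}-\frac{2x}{x+1}$, $f_h(x)=\frac12(\sqrt x-1)^2$, $f_\Delta(x)=\frac{(x-1)^2}{x+1}$. Then $M_{SA}=C_{f_{SA}}=\sum_i\sqrt{(p_i^2+q_i^2)/2}-1$, $M_{SG}=C_{f_{SG}}=\sum_i\big(\sqrt{(p_i^2+q_i^2)/2}-\sqrt{p_iq_i}\big)$, $M_{SH}=C_{f_{SH}}=\sum_i\big(\sqrt{(p_i^2+q_i^2)/2}-\frac{2p_iq_i}{p_i+q_i}\big)$,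 $h=C_{f_h}=\frac12\sum_i(\sqrt{p_i}-\sqrt{q_i})^2$, $\Delta=C_{f_\Delta}=\sum_i\frac{(p_i-q_i)^2}{p_i+q_i}$; and $\xi_{SA}=\xi_{f_{SA}}$, $\xi_{SG}=\xi_{f_{SG}}$, $\xi_{SH}=\xi_{f_{SH}}$, $\xi_h=\xi_{f_h}$, $\xi_\Delta=\xi_{f_\Delta}$. *)

(* Defs.v *)
From HB Require Import structures.
From mathcomp Require Import all_boot all_order all_algebra.
From mathcomp Require Import all_classical all_reals all_analysis.
Set Implicit Arguments. Unset Strict Implicit. Unset Printing Implicit Defensive.
Import Order.TTheory GRing.Theory Num.Theory.
Import numFieldNormedType.Exports.
Local Open Scope ring_scope.

Section Divergences.
Variable R : realType.

Definition Gamma (n : nat) (P : 'I_n -> R) : Prop :=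
  (forall i, 0 < P i) /\ \sum_(i < n) P i = 1.

Definition Cf (n : nat) (f : R -> R) (P Q : 'I_n -> R) : R :=
  \sum_(i < n) Q i * f (P i / Q i).

Definition Ef (n : nat) (f : R -> R) (P Q : 'I_n -> R) : R :=
  \sum_(i < n) (P i - Q i) * derive1 f (P i / Q i).

Definition xif (n : nat) (f : R -> R) (P Q : 'I_n -> R) : R :=
  Ef f P Q - Cf f P Q.

Definition f_SA (x : R) : R := Num.sqrt ((x ^+ 2 + 1) / 2) - (x + 1) / 2.
Definition f_SG (x : R) : R := Num.sqrt ((x ^+ 2 + 1) / 2) - Num.sqrt x.
Definition f_SH (x : R) : R := Num.sqrt ((x ^+ 2 + 1) / 2) - 2 * x / (x + 1).
Definition f_h (x : R) : R := (Num.sqrt x - 1) ^+ 2 / 2.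
Definition f_Delta (x : R) : R := (x - 1) ^+ 2 / (x + 1).

End Divergences.

(* Main.v *)
Require Import Defs.
From HB Require Import structures.
From mathcomp Require Import all_boot all_order all_algebra.
From mathcomp Require Import all_classical all_reals all_analysis.
From mathcomp Require Import ring lra.
Import Order.TTheory GRing.Theory Num.Theory.
Import numFieldNormedType.Exports.
Set Implicit Arguments. Unset Strict Implicit.
Local Open Scope ring_scope.

Lemma is_derive_ext (R : realType) (f g : R -> R) (x d : R) :
  (forall y, f y = g y) -> is_derive x 1 f d -> is_derive x 1 g d.
Proof. by move=> e; have -> : f = g by apply/funext. Qed.
Arguments is_derive_ext {R f g x d}.

Lemma der_of (R : realType) (f : R -> R) (x d : R) :
  is_derive x 1 f d -> derive1 f x = d.
Proof. by move=> H; rewrite derive1E derive_val. Qed.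
Arguments der_of {R f x d}.

Lemma dg (R : realType) (x : R) : is_derive x 1 (fun y : R => (y^+2+1)/2) x.
Proof.
have H1 := is_deriveX 2 (@is_derive_id _ _ x 1).
have H2 := is_deriveD H1 (@is_derive_cst _ _ _ (1:R) x 1).
have H3 := @is_deriveZ _ _ _ _ (2^-1) x 1 _ H2.
apply: (is_derive_ext _ (is_derive_eq H3 _)).
  by move=> y /=; rewrite /GRing.scale /= mulrC.
rewrite /GRing.scale /=; field; by rewrite ?pnatr_eq0.
Qed.

Lemma dS (R : realType) (x : R) : 0 < x ->
  is_derive x 1 (fun y : R => Num.sqrt ((y^+2+1)/2))
    (x * Num.sqrt ((x^+2+1)/2) / (x^+2+1)).
Proof.
move=> hx.
have hg : 0 < (x^+2+1)/2 by apply: divr_gt0 => //; apply: ltr_wpDl => //; apply: sqr_ge0.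
have H := @is_derive1_comp R Num.sqrt (fun y : R => (y^+2+1)/2) x _ _ (is_derive1_sqrt hg) (dg x).
apply: (is_derive_ext _ (is_derive_eq H _)); first by [].
have hs : 0 < Num.sqrt ((x^+2+1)/2) by rewrite sqrtr_gt0.
have e : x^+2 + 1 = 2 * Num.sqrt ((x^+2+1)/2) ^+ 2.
  by rewrite sqr_sqrtr ?ltW //; field; rewrite ?pnatr_eq0.
move: hs e; move: (Num.sqrt _) => s hs e.
rewrite e; field; rewrite ?pnatr_eq0 ?gt_eqF //.
Qed.

Lemma dlin (R : realType) (x : R) : is_derive x 1 (fun y : R => (y+1)/2) (1/2).
Proof.
have H2 := is_deriveD (@is_derive_id _ _ x 1) (@is_derive_cst _ _ _ (1:R) x 1).
have H3 := @is_deriveZ _ _ _ _ (2^-1) x 1 _ H2.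
apply: (is_derive_ext _ (is_derive_eq H3 _)).
  by move=> y /=; rewrite /GRing.scale /= mulrC.
by rewrite /GRing.scale /= addr0 mulr1 mul1r.
Qed.

Lemma dinv (R : realType) (x : R) : 0 < x ->
  is_derive x 1 (fun y : R => (y+1)^-1) (- (x+1)^-2).
Proof.
move=> hx.
have H2 := is_deriveD (@is_derive_id _ _ x 1) (@is_derive_cst _ _ _ (1:R) x 1).
have hx1 : (id + cst 1) x != 0 :> R by rewrite /= gt_eqF // ltr_wpDl // ltW.
have H3 := is_deriveV hx1 H2.
apply: (is_derive_ext _ (is_derive_eq H3 _)); first by [].
by rewrite /GRing.scale /= addr0 mulr1.
Qed.

Lemma drat (R : realType) (x : R) : 0 < x ->
  is_derive x 1 (fun y : R => 2 * y / (y+1)) (2 / (x+1)^+2).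
Proof.
move=> hx.
have H1 := @is_deriveZ _ _ _ _ 2 x 1 _ (@is_derive_id _ _ x 1).
have H := is_deriveM H1 (dinv hx).
apply: (is_derive_ext _ (is_derive_eq H _)).
  by move=> y /=; rewrite /GRing.scale /=.
rewrite /GRing.scale /=.
have hx1 : x + 1 != 0 by rewrite gt_eqF // ltr_wpDl // ltW.
rewrite /GRing.scale /=. field; exact: hx1.
Qed.

Ltac unsc := rewrite /GRing.scale /= ?/GRing.scale /=.

Lemma dSA (R : realType) (x : R) : 0 < x ->
  derive1 (@f_SA R) x = x * Num.sqrt ((x^+2+1)/2) / (x^+2+1) - 1/2.
Proof.
move=> hx; apply: der_of.
exact: (is_derive_ext _ (is_deriveB (dS hx) (dlin x))).
Qed.

Lemma dSH (R : realType) (x : R) : 0 < x ->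
  derive1 (@f_SH R) x = x * Num.sqrt ((x^+2+1)/2) / (x^+2+1) - 2 / (x+1)^+2.
Proof.
move=> hx; apply: der_of.
exact: (is_derive_ext _ (is_deriveB (dS hx) (drat hx))).
Qed.

Lemma dSG (R : realType) (x : R) : 0 < x ->
  derive1 (@f_SG R) x = x * Num.sqrt ((x^+2+1)/2) / (x^+2+1) - (2 * Num.sqrt x)^-1.
Proof.
move=> hx; apply: der_of.
exact: (is_derive_ext _ (is_deriveB (dS hx) (is_derive1_sqrt hx))).
Qed.

Lemma dh (R : realType) (x : R) : 0 < x ->
  derive1 (@f_h R) x = (Num.sqrt x - 1) / (2 * Num.sqrt x).
Proof.
move=> hx; apply: der_of.
have H := is_deriveB (is_derive1_sqrt hx) (@is_derive_cst _ _ _ (1:R) x 1).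
have H2 := is_deriveX 2 H.
have H3 := @is_deriveZ _ _ _ _ (2^-1) x 1 _ H2.
apply: (is_derive_ext _ (is_derive_eq H3 _)).
  by move=> y /=; unsc; rewrite mulrC.
have ht : 0 < Num.sqrt x by rewrite sqrtr_gt0.
unsc; rewrite (_ : (Num.sqrt - cst 1) x = Num.sqrt x - 1) //; field; by rewrite gt_eqF.
Qed.

Lemma dDelta (R : realType) (x : R) : 0 < x ->
  derive1 (@f_Delta R) x = (x - 1) * (x + 3) / (x+1)^+2.
Proof.
move=> hx; apply: der_of.
have H := is_deriveB (@is_derive_id _ _ x 1) (@is_derive_cst _ _ _ (1:R) x 1).
have H2 := is_deriveX 2 H.
have H3 := is_deriveM H2 (dinv hx).
apply: (is_derive_ext _ (is_derive_eq H3 _)).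
  by move=> y /=; unsc.
have hx1 : x + 1 != 0 by rewrite gt_eqF // ltr_wpDl // ltW.
unsc; rewrite (_ : (id - cst 1) x = x - 1) // (_ : ((id - cst 1) ^+ 2) x = (x - 1)^+2) //; field; exact: hx1.
Qed.

Definition HH (R : realFieldType) (a b : R) := [/\ 0 < a, 0 < b, a^+2 + b^+2 = 2 & b <= 1].

Lemma P1 (R : realFieldType) (a b : R) : HH a b -> 2 * a <= 3 - b^+2.
Proof.
case=> ha hb hab hb1.
have h2 : 0 < 3 - b^+2 + 2*a by nra.
have h1 : (3 - b^+2 - 2 * a) * (3 - b^+2 + 2*a) = (1 - b^+2)^+2.
  rewrite -[LHS]subr_sqr. nra.
have h3 : 0 <= (3 - b^+2 - 2 * a) * (3 - b^+2 + 2*a) by rewrite h1 sqr_ge0.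
rewrite pmulr_lge0 // in h3; lra.
Qed.
Lemma P3 (R : realFieldType) (a b : R) : HH a b -> 1 - b^+2 + b <= a.
Proof. 
case=> ha hb hab hb1.
have h2 : 0 < 1 - b^+2 + b + a by nra.
have h1 : (a - (1 - b^+2 + b)) * (a + (1 - b^+2 + b)) = (1 - b)^+3 * (1 + b).
  rewrite -[LHS]subr_sqr. nra.
have h3 : 0 <= (a - (1 - b^+2 + b)) * (a + (1 - b^+2 + b)).
  rewrite h1; apply: mulr_ge0; [apply: exprn_ge0|]; lra.
rewrite pmulr_lge0 // in h3; lra.
Qed.
Lemma P4 (R : realFieldType) (a b : R) : HH a b -> a + b <= 2.
Proof. case=> ha hb hab hb1. nra. Qed.
Lemma Q1 (R : realFieldType) (a b : R) : HH a b -> 0 <= a^+3 - 3 * a + 2.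
Proof. case=> ha hb hab hb1.
have h : 0 <= (a - 1)^+2 * (a + 2) by apply: mulr_ge0; [apply: sqr_ge0|lra].
nra. Qed.
Lemma Q4 (R : realFieldType) (a b : R) : HH a b -> 2 * a * b <= a + b.
Proof. move=> h; have := P4 h; case: h=> ha hb hab hb1 h4.
have h : (a + b - 2) * (a + b + 1) <= 0 by apply: mulr_le0_ge0; lra.
nra. Qed.
Lemma Q3 (R : realFieldType) (a b : R) : HH a b -> (a^+2 - 1) * a * b <= a - b.
Proof.
case=> ha hb hab hb1.
have hc : 0 < 1 - b + b^+3 by nra.
have h2 : 0 < a * (1 - b + b^+3) + b by nra.
have h1 : (a * (1 - b + b^+3) - b) * (a * (1 - b + b^+3) + b) =
   (1 - b)^+3 * (b^+5 + 3 * b^+4 + 2 * b^+3 + 2 * b + 2).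
  rewrite -[LHS]subr_sqr exprMn. have -> : a^+2 = 2 - b^+2 by lra. ring.
have h3 : 0 <= (a * (1 - b + b^+3) - b) * (a * (1 - b + b^+3) + b).
  rewrite h1; apply: mulr_ge0; [apply: exprn_ge0|]; nra.
rewrite pmulr_lge0 // in h3.
have -> : a^+2 - 1 = 1 - b^+2 by lra.
nra.
Qed.

Lemma Cineq (R : realFieldType) (a b k : R) : HH a b -> 0 < k ->
  k * (a - 1) <= k * (a - b^+2) / 3 /\
  k * (a - b^+2) / 3 <= 2 * k * (1 - b^+2) / 4 /\
  2 * k * (1 - b^+2) / 4 <= k * (a - b) / 2 /\
  k * (a - b) / 2 <= k * (1 - b).
Proof.
move=> h hk; have := P1 h; have := P3 h; have := P4 h; case: h => ha hb hab hb1 h4 h3 h1.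
have L : forall A B : R, A <= B -> k * A <= k * B by move=> A B; apply: ler_wpM2l; lra.
split; [|split; [|split]].
- have : k * (a - 1) <= k * ((a - b^+2)/3) by apply: L; lra.
  lra.
- have : k * ((a - b^+2)/3) <= k * ((1 - b^+2)/2) by apply: L; lra.
  lra.
- have : k * ((1 - b^+2)/2) <= k * ((a - b)/2) by apply: L; lra.
  lra.
- have : k * ((a - b)/2) <= k * (1 - b) by apply: L; lra.
  lra.
Qed.

Lemma Gineq (R : realFieldType) (a b : R) : HH a b ->
  1 - a^-1 <= (a^+2 - a^-1) / 3 /\
  (a^+2 - a^-1) / 3 <= 2 * (1 - b^+2) / 4 /\
  2 * (1 - b^+2) / 4 <= (b^-1 - a^-1) / 2 /\
  (b^-1 - a^-1) / 2 <= b^-1 - 1.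
Proof.
move=> h; have := Q1 h; have := Q3 h; have := Q4 h; case: h => ha hb hab hb1 q4 q3 q1.
have eb : b^+2 = 2 - a^+2 by lra.
have a0 : a != 0 by rewrite gt_eqF.
have b0 : b != 0 by rewrite gt_eqF.
split; [|split; [|split]]; rewrite -subr_ge0.
- have -> : (a^+2 - a^-1) / 3 - (1 - a^-1) = (a^+3 - 3 * a + 2) / (3 * a) by field; rewrite ?a0 ?b0.
  by apply: divr_ge0 => //; lra.
- have -> : 2 * (1 - b^+2) / 4 - (a^+2 - a^-1) / 3 = (a^+3 - 3 * a + 2) / (6 * a).
    by rewrite eb; field; rewrite ?a0 ?b0.
  by apply: divr_ge0 => //; lra.
- have -> : (b^-1 - a^-1) / 2 - 2 * (1 - b^+2) / 4 = (a - b - (a^+2 - 1) * a * b) / (2 * a * b).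
    by rewrite eb; field; rewrite ?a0 ?b0.
  by apply: divr_ge0; [lra|nra].
- have -> : b^-1 - 1 - (b^-1 - a^-1) / 2 = (a + b - 2 * a * b) / (2 * a * b) by field; rewrite ?a0 ?b0.
  by apply: divr_ge0; [lra|nra].
Qed.

Definition G (R : realType) (f : R -> R) (x : R) := (x - 1) * derive1 f x - f x.

Lemma le_eqs (R : numDomainType) (x y x' y' : R) : x = x' -> y = y' -> x' <= y' -> x <= y.
Proof. by move=> -> ->. Qed.

Lemma pointwise (R : realType) (x : R) : 0 < x ->
  (f_SA x <= f_SH x / 3 /\ f_SH x / 3 <= f_Delta x / 4 /\
   f_Delta x / 4 <= f_SG x / 2 /\ f_SG x / 2 <= f_h x) /\
  (G (@f_SA R) x <= G (@f_SH R) x / 3 /\ G (@f_SH R) x / 3 <= G (@f_Delta R) x / 4 /\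
   G (@f_Delta R) x / 4 <= G (@f_SG R) x / 2 /\ G (@f_SG R) x / 2 <= G (@f_h R) x).
Proof.
move=> hx.
rewrite /G dSA // dSH // dSG // dh // dDelta //.
rewrite /f_SA /f_SH /f_SG /f_h /f_Delta.
have hg : 0 < (x^+2+1)/2 by apply: divr_gt0 => //; apply: ltr_wpDl => //; apply: sqr_ge0.
have hs : 0 < Num.sqrt ((x^+2+1)/2) by rewrite sqrtr_gt0.
have es : Num.sqrt ((x^+2+1)/2) ^+ 2 = (x^+2+1)/2 by rewrite sqr_sqrtr // ltW.
move: hs es; move: (Num.sqrt ((x^+2+1)/2)) => s hs es.
have ht : 0 < Num.sqrt x by rewrite sqrtr_gt0.
have ex : Num.sqrt x ^+ 2 = x by rewrite sqr_sqrtr // ltW.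
move: ht ex; move: (Num.sqrt x) => t ht ex.
subst x.
have t0 : t != 0 by rewrite gt_eqF.
have s0 : s != 0 by rewrite gt_eqF.
have k1 : t^+2 + 1 != 0 by rewrite gt_eqF // ltr_wpDl // sqr_ge0.
have k2 : (t^+2)^+2 + 1 != 0 by rewrite gt_eqF // ltr_wpDl // sqr_ge0.
have two : (2:R) != 0 by rewrite pnatr_eq0.
have hk : 0 < (t^+2 + 1)/2 by apply: divr_gt0 => //; apply: ltr_wpDl => //; apply: sqr_ge0.
have Hab : HH (s / ((t^+2 + 1)/2)) (t / ((t^+2 + 1)/2)).
  split.
  - exact: divr_gt0.
  - exact: divr_gt0.
  - rewrite !expr_div_n es; field; by rewrite ?k1 ?k2 ?two.
  - rewrite ler_pdivrMr // mul1r; have := sqr_ge0 (t - 1); nra.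
have hu : 2 * ((t^+2 + 1)/2) * s / ((t^+2)^+2 + 1) = (s / ((t^+2 + 1)/2))^-1.
  have e2 : (t^+2)^+2 + 1 = 2 * s^+2 by rewrite es; field; rewrite ?two.
  rewrite e2; field; by rewrite ?k1 ?s0 ?two.
have hw : 2 * ((t^+2)^+2 + 1) / (t^+2+1)^+2 = (s / ((t^+2 + 1)/2))^+2.
  rewrite expr_div_n es; field; by rewrite ?k1 ?two.
have [c1 [c2 [c3 c4]]] := Cineq Hab hk.
have [g1 [g2 [g3 g4]]] := Gineq Hab.
rewrite -hu -hw in g1 g2 g3 g4.
split; (split; [|split; [|split]]).
- apply: (le_eqs _ _ c1); field; by rewrite ?k1 ?k2 ?two ?t0 ?s0.
- apply: (le_eqs _ _ c2); field; by rewrite ?k1 ?k2 ?two ?t0 ?s0.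
- apply: (le_eqs _ _ c3); field; by rewrite ?k1 ?k2 ?two ?t0 ?s0.
- apply: (le_eqs _ _ c4); field; by rewrite ?k1 ?k2 ?two ?t0 ?s0.
- apply: (le_eqs _ _ g1); field; by rewrite ?k1 ?k2 ?two ?t0 ?s0.
- apply: (le_eqs _ _ g2); field; by rewrite ?k1 ?k2 ?two ?t0 ?s0.
- apply: (le_eqs _ _ g3); field; by rewrite ?k1 ?k2 ?two ?t0 ?s0.
- apply: (le_eqs _ _ g4); field; by rewrite ?k1 ?k2 ?two ?t0 ?s0.
Qed.

Unset Implicit Arguments.
Lemma sum_le (R : realType) (n : nat) (F1 F2 : R -> R) (c d : R) (P Q : 'I_n -> R) :
  (forall i, 0 < P i) -> (forall i, 0 < Q i) ->
  (forall x, 0 < x -> F1 x / c <= F2 x / d) ->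
  (\sum_(i < n) Q i * F1 (P i / Q i)) / c <= (\sum_(i < n) Q i * F2 (P i / Q i)) / d.
Proof.
move=> hP hQ H; rewrite !mulr_suml; apply: ler_sum => i _; rewrite -!mulrA.
by apply: ler_wpM2l; [exact: ltW | apply: H; exact: divr_gt0].
Qed.

Lemma xif_eq (R : realType) (n : nat) (f : R -> R) (P Q : 'I_n -> R) :
  (forall i, 0 < Q i) ->
  xif f P Q = \sum_(i < n) Q i * G f (P i / Q i).
Proof.
move=> hQ; rewrite /xif /Ef /Cf -sumrB; apply: eq_bigr => i _; rewrite /G.
have q0 : Q i != 0 by rewrite gt_eqF.
move: (derive1 f (P i / Q i)) (f (P i / Q i)) => u v.
by field.
Qed.

Theorem theorem5p1 (R : realType) (n : nat) (hn : (2 <= n)%N)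
  (P Q : 'I_n -> R) (hP : Gamma P) (hQ : Gamma Q) :
  (Cf (@f_SA R) P Q <= Cf (@f_SH R) P Q / 3 /\
   Cf (@f_SH R) P Q / 3 <= Cf (@f_Delta R) P Q / 4 /\
   Cf (@f_Delta R) P Q / 4 <= Cf (@f_SG R) P Q / 2 /\
   Cf (@f_SG R) P Q / 2 <= Cf (@f_h R) P Q) /\
  (xif (@f_SA R) P Q <= xif (@f_SH R) P Q / 3 /\
   xif (@f_SH R) P Q / 3 <= xif (@f_Delta R) P Q / 4 /\
   xif (@f_Delta R) P Q / 4 <= xif (@f_SG R) P Q / 2 /\
   xif (@f_SG R) P Q / 2 <= xif (@f_h R) P Q).
Proof.
case: hP => hP _; case: hQ => hQ _.
rewrite !xif_eq //.
have pw := fun (x : R) (hx : 0 < x) => @pointwise R x hx.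
split; (split; [|split; [|split]]).
- rewrite -[X in X <= _]divr1 /Cf; apply: sum_le => // x hx; rewrite divr1; exact: (pw x hx).1.1.
- rewrite /Cf; apply: sum_le => // x hx; exact: (pw x hx).1.2.1.
- rewrite /Cf; apply: sum_le => // x hx; exact: (pw x hx).1.2.2.1.
- rewrite -[X in _ <= X]divr1 /Cf; apply: sum_le => // x hx; rewrite divr1; exact: (pw x hx).1.2.2.2.
- rewrite -[X in X <= _]divr1; apply: sum_le => // x hx; rewrite divr1; exact: (pw x hx).2.1.
- apply: sum_le => // x hx; exact: (pw x hx).2.2.1.
- apply: sum_le => // x hx; exact: (pw x hx).2.2.2.1.
- rewrite -[X in _ <= X]divr1; apply: sum_le => // x hx; rewrite divr1; exact: (pw x hx).2.2.2.2.
Qed.
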